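(* For every integer $k\ge 0$, $$\sum_{i=1}^{2^{k}}B_i(t)=\frac{1}{2}\bigl((t+2)^{k}+t^{k}\bigr).$$
   Context: The Stern polynomials $B_n(t)\in\mathbb{Z}[t]$, $n\ge 0$, are defined by $B_0(t)=0$, $B_1(t)=1$, $B_{2n}(t)=tB_n(t)$ and $B_{2n+1}(t)=B_n(t)+B_{n+1}(t)$ for $n\ge 1$. *)

(* Defs.v *)
From mathcomp Require Import all_boot all_order all_algebra.
Set Implicit Arguments. Unset Strict Implicit. Unset Printing Implicit Defensive.
Import GRing.Theory.
Local Open Scope ring_scope.

(* Stern polynomials B_n(t) in Z[t]:  B_0 = 0, B_1 = 1, B_{2n} = t B_n,
   B_{2n+1} = B_n + B_{n+1}  (n >= 1).  Defined by structural recursion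
   on a fuel argument (fuel n suffices since the recursive calls are on
   indices <= (n+1)/2 < n for n >= 2). *)
Fixpoint stern_fuel (fuel : nat) (n : nat) : {poly int} :=
  match fuel with
  | 0%N => 0
  | fuel'.+1 =>
    match n with
    | 0%N => 0
    | 1%N => 1
    | _ => if odd n then stern_fuel fuel' n./2 + stern_fuel fuel' (n./2).+1
           else 'X * stern_fuel fuel' n./2
    end
  end.

Definition stern (n : nat) : {poly int} := stern_fuel n.+1 n.

Lemma stern0 : stern 0 = 0. Proof. by []. Qed.
Lemma stern1 : stern 1 = 1. Proof. by []. Qed.

(* Main.v *)
Require Import Defs.
From mathcomp Require Import all_boot all_order all_algebra.
From Stdlib Require Import Lia.
Import GRing.Theory.
Local Open Scope ring_scope.

Lemma half_le n : (n./2 <= n)%N.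
Proof. by rewrite leq_half_double -addnn ltnW // ltnS leq_addr. Qed.
Lemma half_lt n : (0 < n)%N -> (n./2 < n)%N.
Proof. by move=> h; rewrite ltn_half_double -addnn -{1}(addn0 n) ltn_add2l. Qed.

Lemma fuel_eq f g n : (n < f)%N -> (n < g)%N -> stern_fuel f n = stern_fuel g n.
Proof.
elim: f g n => [|f IH] [|g] n //= hf hg.
case: n hf hg => [|[|n]] // hf hg.
have h2 : ((n.+2)./2 < n.+2)%N by rewrite /= !ltnS half_le.
case: ifP => ho.
- have h3 : ((n.+2)./2.+1 < n.+2)%N.
    rewrite /= !ltnS half_lt //; case: n {h2 hf hg} ho => //.
  by rewrite (IH g) ?(IH g (_./2.+1)) //; apply: leq_trans; eauto.
- by rewrite (IH g) //; apply: leq_trans; eauto.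
Qed.

Lemma sfE f n : (n < f)%N -> stern_fuel f n = stern n.
Proof. by move=> h; apply: fuel_eq. Qed.

Lemma sf_step f m : (1 < m)%N -> stern_fuel f.+1 m =
  if odd m then stern_fuel f m./2 + stern_fuel f (m./2).+1 else 'X * stern_fuel f m./2.
Proof. by case: m => [|[|m]]. Qed.

Lemma stern_even n : stern (n.*2) = 'X * stern n.
Proof.
case: n => [|n]; first by rewrite /stern /= mulr0.
rewrite {1}/stern sf_step; last by rewrite doubleS.
rewrite odd_double doubleK sfE // -addnn addSn ltnS addnS ltnS leq_addr //.
Qed.

Lemma half_odd n : (n.*2.+1)./2 = n.
Proof. exact: (half_bit_double n true). Qed.

Lemma stern_odd n : stern (n.*2.+1) = stern n + stern n.+1.
Proof.
case: n => [|n]; first by rewrite /stern /= add0r.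
rewrite {1}/stern sf_step; last by rewrite doubleS.
rewrite oddS odd_double half_odd [~~ false]/=.
rewrite !sfE //.
all: rewrite -addnn -?plusE; apply/ltP; lia.
Qed.

Definition P i : {poly rat} := map_poly intr (stern i).

Lemma P_even n : P n.*2 = 'X * P n.
Proof. by rewrite /P stern_even rmorphM /= map_polyX. Qed.
Lemma P_odd n : P n.*2.+1 = P n + P n.+1.
Proof. by rewrite /P stern_odd rmorphD. Qed.
Lemma P0 : P 0 = 0.
Proof. by rewrite /P /stern /= rmorph0. Qed.
Lemma P_pow k : P (2 ^ k) = 'X ^+ k.
Proof.
elim: k => [|k IH]; first by rewrite /P /stern /= rmorph1.
by rewrite expnS mul2n P_even IH exprS.
Qed.

Lemma sum_double (F : nat -> {poly rat}) m :
  \sum_(0 <= i < m.*2) F i = \sum_(0 <= i < m) (F i.*2 + F i.*2.+1).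
Proof.
elim: m => [|m IH]; first by rewrite !big_geq.
by rewrite doubleS !big_nat_recr //= IH addrA.
Qed.

Definition A k := \sum_(0 <= i < 2 ^ k) P i.

Lemma A_rec k : A k.+1 = 'X * A k + A k *+ 2 + 'X ^+ k.
Proof.
rewrite /A expnS mul2n sum_double.
under eq_bigr => i _ do rewrite P_even P_odd.
rewrite !big_split /= -mulr_sumr.
have -> : \sum_(0 <= i < 2 ^ k) P i.+1 = \sum_(0 <= i < 2 ^ k) P i + 'X ^+ k.
  by rewrite -P_pow -big_nat_recr //= big_nat_recl // P0 add0r.
by rewrite mulr2n !addrA.
Qed.

Lemma A_key k : A k *+ 2 = ('X + 2%:P) ^+ k - 'X ^+ k.
Proof.
elim: k => [|k IH].
  by rewrite /A expn0 big_nat1 P0 mul0rn !expr0 subrr.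
rewrite A_rec !mulrnDl -mulrnAr IH !exprS mulrDl mulrBr.
rewrite polyC_natr mulr_natl.
set a := (_ + _) ^+ k; set b := 'X^k.
by rewrite -mulr2n mulrnBl -addrA subrK addrAC.
Qed.

Theorem corollary3p3 (k : nat) :
  (\sum_(1 <= i < (2 ^ k).+1) map_poly intr (stern i) : {poly rat})
  = (2%:R^-1 : rat) *: (('X + 2%:P) ^+ k + 'X ^+ k).
Proof.
have -> : \sum_(1 <= i < (2 ^ k).+1) map_poly intr (stern i) = A k + 'X ^+ k.
  rewrite /A -P_pow -big_nat_recr //= (@big_ltn _ _ _ 0) // P0 add0r.
  by apply: eq_bigr.
have -> : ('X + 2%:P) ^+ k + 'X ^+ k = (A k + 'X ^+ k) *+ 2.
  by rewrite mulrnDl A_key mulr2n addrA subrK.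
by rewrite -scalerMnr scalerMnl -mulr_natr mulVf ?scale1r // pnatr_eq0.
Qed.
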